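(* Let $w\in\{0,1\}^n$ be a random variable satisfying the $\epsilon$-martingale condition. Then \[ \Pr[w\text{ is forkable}]=\Pr[\mu(w)\ge0]\le\exp(-\Omega(n)). \]
   Context: Characteristic strings and forks. A characteristic string is $w=w_1\dots w_n\in\{0,1\}^n$; index $i$ is honest if $w_i=0$ and adversarial if $w_i=1$. A fork for $w$ is a rooted tree with edges directed away from the root $r$ and labeling $\ell:V\to\{0,\dots,n\}$ with (F1) $\ell(r)=0$; (F2) labels strictly increasing along directed paths; (F3) each honest index labels exactly one vertex; (F4) for honest $i<j$ the vertex labeled $i$ has strictly smaller depth than the vertex labeled $j$. Write $F\vdash w$. A vertex is honest if it is the root or labeled by an honest index. A tine is a directed path from the root; its length is its number of edges, $\ell(t)$ the label of its last vertex; $\mathrm{height}(F)$ is the maximum tine length. A fork is closed if every leaf is honest; a closed fork has a unique longest tine $\hat t$. For closed $F\vdash w$ and tine $t$: $\mathrm{gap}(t)=\mathrm{length}(\hat t)-\mathrm{length}(t)$, $\mathrm{reserve}(t)=|\{i:w_i=1,\ i>\ell(t)\}|$, $\mathrm{reach}(t)=\mathrm{reserve}(t)-\mathrm{gap}(t)$. Two tines are disjoint if they share no edge (a tine may be paired with itself). $\mu(F)=\max\min\{\mathrm{reach}(t_1),\mathrm{reach}(t_2)\}$ over disjoint pairs, and $\mu(w)=\max\{\mu(F):F\vdash w\text{ closed}\}$. A fork $F$ is balanced if it contains two disjoint tines $t_1,t_2$ with $\mathrm{length}(t_1)=\mathrm{length}(t_2)=\mathrm{height}(F)$; $w$ is forkable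 if there is a balanced fork for $w$ (equivalently $\mu(w)\ge0$). A random variable $W\in\{0,1\}^n$ satisfies the $\epsilon$-martingale condition ($\epsilon\in(0,1)$) if for every $t$, $\Pr[W_t=1\mid W_1,\dots,W_{t-1}]\le(1-\epsilon)/2$. The asymptotic constant may depend on $\epsilon$. *)

(* Defs.v *)
From HB Require Import structures.
From mathcomp Require Import all_boot all_order all_algebra.
From mathcomp Require Import boolp reals sequences exp.
Set Implicit Arguments. Unset Strict Implicit. Unset Printing Implicit Defensive.
Import Order.TTheory GRing.Theory Num.Theory.

(* A characteristic string w = w_1 ... w_n is an n.-tuple of booleans;
   w_i (1 <= i <= n) is  nth false w i.-1 ; true = 1 (adversarial),
   false = 0 (honest). *)
Definition wbit n (w : n.-tuple bool) (i : nat) : bool := nth false w i.-1.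
Definition honest_idx n (w : n.-tuple bool) (i : nat) : bool :=
  (1 <= i <= n) && ~~ wbit w i.
Definition adv_idx n (w : n.-tuple bool) (i : nat) : bool :=
  (1 <= i <= n) && wbit w i.

(* A finite rooted tree on the vertex set 'I_m.+1, root = ord0, given by a
   parent map (the parent of the root is irrelevant); the directed edges are
   (par v, v) for v <> root.  lab is the labeling. *)
Record tree := Tree { tsz : nat; par : 'I_tsz.+1 -> 'I_tsz.+1;
                      lab : 'I_tsz.+1 -> nat }.

Definition root (F : tree) : 'I_(tsz F).+1 := ord0.

Definition child (F : tree) (a b : 'I_(tsz F).+1) : bool :=
  (b != root F) && (par b == a).

(* a tine: directed path from the root, given by the vertices after the root *)
Definition tine (F : tree) (s : seq 'I_(tsz F).+1) : bool := path (@child F) (root F) s.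
Definition tine_len (F : tree) (s : seq 'I_(tsz F).+1) : nat := size s.
Definition tine_lab (F : tree) (s : seq 'I_(tsz F).+1) : nat := lab (last (root F) s).
Definition tine_edges (F : tree) (s : seq 'I_(tsz F).+1) :=
  zip (root F :: s) s.
Definition disjoint_tines (F : tree) (s1 s2 : seq 'I_(tsz F).+1) : bool :=
  all (fun e => e \notin tine_edges s2) (tine_edges s1).

Definition is_fork n (w : n.-tuple bool) (F : tree) : Prop :=
  [/\ (forall v : 'I_(tsz F).+1, lab v <= n),
      lab (root F) = 0,
      (forall v, v != root F -> lab (par v) < lab v),
      (forall i, honest_idx w i -> #|[pred v : 'I_(tsz F).+1 | lab v == i]| = 1) &
      (forall (s1 s2 : seq 'I_(tsz F).+1) i j, tine s1 -> tine s2 -> honest_idx w i ->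
                 honest_idx w j -> i < j -> tine_lab s1 = i -> tine_lab s2 = j ->
                 tine_len s1 < tine_len s2) ].

Definition is_height (F : tree) (h : nat) : Prop :=
  (exists s : seq 'I_(tsz F).+1, tine s /\ tine_len s = h) /\
  (forall s : seq 'I_(tsz F).+1, tine s -> tine_len s <= h).

Definition balanced (F : tree) : Prop :=
  exists h, is_height F h /\
    exists s1 s2 : seq 'I_(tsz F).+1, [/\ tine s1, tine s2, disjoint_tines s1 s2,
                      tine_len s1 = h & tine_len s2 = h].

Definition forkable n (w : n.-tuple bool) : Prop :=
  exists F, is_fork w F /\ balanced F.

Definition honest_vertex n (w : n.-tuple bool) (F : tree) (v : 'I_(tsz F).+1) :=
  (v == root F) || honest_idx w (lab v).
Definition is_leaf (F : tree) (v : 'I_(tsz F).+1) : bool :=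
  [forall u, ~~ child v u].
Definition closed_fork n (w : n.-tuple bool) (F : tree) : Prop :=
  forall v : 'I_(tsz F).+1, is_leaf v -> honest_vertex w v.

(* reserve, gap (relative to height h = length of the longest tine), reach *)
Definition reserve n (w : n.-tuple bool) (F : tree) (s : seq 'I_(tsz F).+1) : nat :=
  count (fun i => adv_idx w i && (tine_lab s < i)) (iota 1 n).
Definition reach n (w : n.-tuple bool) (F : tree) (h : nat)
  (s : seq 'I_(tsz F).+1) : int :=
  ((reserve w s)%:Z - (h%:Z - (tine_len s)%:Z))%R.

(* mu(w) >= 0 : some closed fork for w has a pair of disjoint tines whose
   minimal reach is nonnegative (mu(w) is a max of integers bounded above by n
   over a nonempty family, so it is attained). *)
Definition mu_nonneg n (w : n.-tuple bool) : Prop :=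
  exists F, [/\ is_fork w F, closed_fork w F &
    exists h, is_height F h /\
      exists s1 s2 : seq 'I_(tsz F).+1, [/\ tine s1, tine s2, disjoint_tines s1 s2 &
        (0 <= Num.min (reach w h s1) (reach w h s2))%R]].

Section Prob.
Context {R : realType}.
Local Open Scope ring_scope.

Definition is_distr n (P : n.-tuple bool -> R) : Prop :=
  (forall w, 0 <= P w) /\ \sum_(w : n.-tuple bool) P w = 1.

Definition eps_martingale n (eps : R) (P : n.-tuple bool -> R) : Prop :=
  forall (t : nat) (b : seq bool), (1 <= t <= n)%N -> size b = t.-1 ->
    \sum_(w : n.-tuple bool | (take t.-1 w == b) && wbit w t) P w <=
    (1 - eps) / 2 * \sum_(w : n.-tuple bool | take t.-1 w == b) P w.

Definition prob n (P : n.-tuple bool -> R) (E : n.-tuple bool -> Prop) : R :=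
  \sum_(w : n.-tuple bool | `[< E w >]) P w.
End Prob.

(* Main.v *)
Require Import Defs.
From HB Require Import structures.
From mathcomp Require Import all_boot all_order all_algebra.
From mathcomp Require Import boolp reals sequences exp.
From mathcomp Require Import zify ring lra.
Import Order.TTheory GRing.Theory Num.Theory.
Set Implicit Arguments. Unset Strict Implicit. Unset Printing Implicit Defensive.

Section TreeBasics.
Variable F : tree.
Notation V := ('I_(tsz F).+1).
Notation rt := (Defs.root F).

Lemma childP (a b : V) : child a b -> a = par b /\ b != rt.
Proof. by rewrite /child => /andP[nb /eqP <-]. Qed.

Lemma tine_rcons (s : seq V) x :
  tine (rcons s x) = tine s && child (last rt s) x.
Proof. by rewrite /tine rcons_path. Qed.

Lemma tine_nil : tine ([::] : seq V).
Proof. by []. Qed.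

Lemma tine_cat (s1 s2 : seq V) : tine (s1 ++ s2) -> tine s1.
Proof. by rewrite /tine cat_path => /andP[]. Qed.

Lemma tine_last_nonroot (s : seq V) : tine s -> s != [::] -> last rt s != rt.
Proof.
case/lastP: s => [//|s x]; rewrite tine_rcons last_rcons => /andP[_].
by case/childP.
Qed.

Lemma tine_uniq (s1 s2 : seq V) : tine s1 -> tine s2 ->
  last rt s1 = last rt s2 -> s1 = s2.
Proof.
elim/last_ind: s1 s2 => [|s1 x IH] s2.
  case/lastP: s2 => [//|s2 y] _ T2 /= E.
  have := tine_last_nonroot T2; rewrite -E eqxx.
  by case: s2 {T2 E} => [|? ?] /(_ isT).
case/lastP: s2 => [|s2 y].
  move=> T1 _ /= E.
  have := tine_last_nonroot T1; rewrite E eqxx.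
  by case: s1 {IH T1 E} => [|? ?] /(_ isT).
rewrite !tine_rcons !last_rcons => /andP[T1 C1] /andP[T2 C2] E; subst y.
case/childP: C1 => E1 _; case/childP: C2 => E2 _.
by rewrite (IH s2 T1 T2 (etrans E1 (esym E2))).
Qed.


Lemma edges_rcons (s : seq V) x :
  tine_edges (rcons s x) = rcons (tine_edges s) (last rt s, x).
Proof.
rewrite /tine_edges; elim: s rt => [//|y s IH] r /=.
by rewrite IH.
Qed.

Lemma disj_rconsl (s t : seq V) x : disjoint_tines (rcons s x) t -> disjoint_tines s t.
Proof. by rewrite /disjoint_tines edges_rcons all_rcons => /andP[]. Qed.

Lemma disj_rconsr (s t : seq V) x : disjoint_tines s (rcons t x) -> disjoint_tines s t.
Proof.
rewrite /disjoint_tines edges_rcons => /allP H; apply/allP => e es.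
by have := H e es; rewrite mem_rcons in_cons negb_or => /andP[].
Qed.

Hypothesis F2 : forall v : V, v != rt -> lab (par v) < lab v.

Fixpoint anc (k : nat) (v : V) : seq V :=
  if k is k'.+1 then (if v == rt then [::] else rcons (anc k' (par v)) v) else [::].

Lemma ancP k v : lab v < k -> tine (anc k v) /\ last rt (anc k v) = v.
Proof.
elim: k v => [//|k IH] v /= lt.
case: eqP => [-> //|/eqP nv].
have [T L] := IH (par v) (leq_trans (F2 nv) (ltnSE lt)).
rewrite tine_rcons last_rcons T L /child nv; split=> //=; exact/eqP.
Qed.

Definition tine_to (v : V) := anc (lab v).+1 v.
Definition depth (v : V) := size (tine_to v).

Lemma tine_toP v : tine (tine_to v) /\ last rt (tine_to v) = v.
Proof. exact: ancP. Qed.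

Lemma tine_to_eq (s : seq V) : tine s -> tine_to (last rt s) = s.
Proof. move=> T; have [T' L] := tine_toP (last rt s); exact: tine_uniq. Qed.

Lemma depth_tine (s : seq V) : tine s -> depth (last rt s) = size s.
Proof. by move=> T; rewrite /depth tine_to_eq. Qed.

Lemma depth_root : depth rt = 0.
Proof. by rewrite /depth /tine_to /=. Qed.

Lemma depth_pos v : v != rt -> 0 < depth v.
Proof. by move=> nv; rewrite /depth /tine_to /= (negbTE nv) size_rcons. Qed.

Lemma tine_lab_lt (s : seq V) x : tine (rcons s x) -> lab (last rt s) < lab x.
Proof. by rewrite tine_rcons => /andP[_ /childP[-> nx]]; apply: F2. Qed.

Lemma edge_in_tine (s : seq V) x : tine s -> x \in s -> (par x, x) \in tine_edges s.
Proof.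
move=> T xs; case/splitPr: xs T => p1 p2.
rewrite -cat_rcons /tine cat_path rcons_path => /andP[/andP[_ C] _].
case/childP: C => E _; rewrite /tine_edges -E.
elim: p1 rt {E} => [|y p1 IH] r /=; first by rewrite mem_head.
by rewrite in_cons IH orbT.
Qed.
End TreeBasics.

Lemma card_lift m (v : 'I_m.+2) (P : pred 'I_m.+2) :
  #|[pred u | P u]| = P v + #|[pred j : 'I_m.+1 | P (lift v j)]|.
Proof.
rewrite -!sum1_card !big_mkcond /= (bigD1_ord v) //=.
by rewrite [in RHS]big_mkcond /= !inE; case: (P v).
Qed.

Section Embed.
Variables (n m : nat) (w : n.-tuple bool).
Variables (parB : 'I_m.+2 -> 'I_m.+2) (labB : 'I_m.+2 -> nat).
Variables (parS : 'I_m.+1 -> 'I_m.+1) (labS : 'I_m.+1 -> nat).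
Variable v : 'I_m.+2.
Hypothesis v0 : v != ord0.
Hypothesis leafv : forall u, u != ord0 -> parB u != v.
Hypothesis labSE : forall j, labS j = labB (lift v j).
Hypothesis parSE : forall j, j != ord0 -> parB (lift v j) = lift v (parS j).
Hypothesis vadv : ~~ honest_idx w (labB v).

Local Notation B := (@Tree m.+1 parB labB).
Local Notation S := (@Tree m parS labS).
Local Notation e := (lift v).

Lemma e0 : e ord0 = ord0.
Proof. by apply/val_inj; rewrite /e /= /bump leqNgt lt0n v0. Qed.

Lemma e_eq0 j : (e j == ord0) = (j == ord0).
Proof. by rewrite -e0 (inj_eq lift_inj). Qed.

Lemma childSB a b : @child S a b = @child B (e a) (e b).
Proof.
rewrite /child /= /Defs.root /=.
have -> : (e b != ord0) = (b != ord0) by rewrite e_eq0.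
case: eqP => //= /eqP nb.
by rewrite parSE // (inj_eq lift_inj).
Qed.

Lemma tineSB (s : seq 'I_m.+1) : @tine S s = @tine B (map e s).
Proof.
rewrite /tine /Defs.root /= -e0.
elim: s ord0 => [//|x s IH] r /=.
by rewrite IH childSB.
Qed.

Definition pr (u : 'I_m.+2) : 'I_m.+1 := odflt ord0 (unlift v u).

Lemma prK u : u != v -> e (pr u) = u.
Proof. by rewrite eq_sym => /unlift_some[j -> E]; rewrite /pr E. Qed.

Lemma eK j : pr (e j) = j.
Proof. by rewrite /pr /e liftK. Qed.

Lemma map_pr (T : seq 'I_m.+2) : v \notin T -> map e (map pr T) = T.
Proof.
elim: T => [//|x T IH] /=; rewrite in_cons negb_or => /andP[nx nT].
by rewrite prK 1?eq_sym // IH.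
Qed.

Lemma tineB_notin (T : seq 'I_m.+2) : @tine B T -> v \notin T ->
  exists s, T = map e s /\ @tine S s.
Proof.
move=> TT nT; exists (map pr T); rewrite map_pr //; split => //.
by rewrite tineSB map_pr.
Qed.

Lemma tineB_in (T : seq 'I_m.+2) : @tine B T -> v \in T ->
  exists s, T = rcons (map e s) v /\ @tine S s /\ v \notin map e s.
Proof.
move=> TT vT.
case/splitPr: vT TT => p1 p2 TT.
have p2nil : p2 = [::].
  case: p2 TT => [//|y p2]; rewrite /tine cat_path /= => /and3P[_ _ /andP[C _]].
  case/childP: C => /= E ny.
  by have := leafv ny; rewrite -E eqxx.
subst p2; rewrite cats1 in TT *.
have nv : v \notin p1.
  apply/negP=> vp; case/splitPr: vp TT => q1 q2.
  rewrite rcons_cat /tine cat_path /= => /andP[_ /andP[_ P]].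
  case: q2 P => [|y q2] /= /andP[/childP[/= E ny] _];
    by have := leafv ny; rewrite -E eqxx.
have Tp : @tine B p1 by move: TT; rewrite -cats1; apply: tine_cat.
have [s [E Ts]] := tineB_notin Tp nv.
by exists s; rewrite -E.
Qed.

Lemma last_e (s : seq 'I_m.+1) : last ord0 (map e s) = e (last ord0 s).
Proof. by rewrite -{1}e0 last_map. Qed.

Lemma tine_labSB (s : seq 'I_m.+1) : @tine_lab S s = @tine_lab B (map e s).
Proof. by rewrite /tine_lab /Defs.root /= last_e labSE. Qed.

Lemma edgesSB (s : seq 'I_m.+1) :
  @tine_edges B (map e s) = map (fun p => (e p.1, e p.2)) (@tine_edges S s).
Proof.
rewrite /tine_edges /Defs.root /= -e0.
elim: s ord0 => [//|x s IH] r /=.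
by rewrite IH.
Qed.

Lemma disjSB (s1 s2 : seq 'I_m.+1) :
  @disjoint_tines S s1 s2 = @disjoint_tines B (map e s1) (map e s2).
Proof.
rewrite /disjoint_tines !edgesSB all_map; apply: eq_all => p /=.
rewrite (mem_map (f := fun p : 'I_m.+1 * 'I_m.+1 => (e p.1, e p.2))) //.
move=> [a b] [c d] E; have E1 : e a = e c := f_equal fst E; have E2 : e b = e d := f_equal snd E; by rewrite (lift_inj E1) (lift_inj E2).
Qed.

Lemma reserveSB (s : seq 'I_m.+1) : reserve w (F := S) s = reserve w (F := B) (map e s).
Proof. by rewrite /reserve tine_labSB. Qed.

Lemma forkBS : is_fork w B -> is_fork w S.
Proof.
case=> L0 L1 L2 L3 L4; split.
- by move=> j; rewrite /= labSE.
- by rewrite /Defs.root /= labSE e0.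
- move=> j nj /=; rewrite !labSE -parSE //; apply: L2.
  by rewrite /Defs.root /= e_eq0.
- move=> i hi; rewrite -(L3 i hi) (card_lift v) /=.
  have -> : (labB v == i) = false.
    by apply/negP => /eqP E; move: vadv; rewrite E hi.
  by apply: eq_card => j; rewrite !inE labSE.
- move=> s1 s2 i j T1 T2 hi hj ij E1 E2.
  rewrite /tine_len -(size_map e s1) -(size_map e s2).
  by apply: (L4 _ _ i j) => //; rewrite -?tineSB -?tine_labSB.
Qed.

Lemma notin_honest (T : seq 'I_m.+2) : @tine B T -> honest_idx w (@tine_lab B T) ->
  v \notin T.
Proof.
move=> TT hT; apply/negP => vT.
have [s [E _]] := tineB_in TT vT.
by move: hT; rewrite E /tine_lab last_rcons (negbTE vadv).
Qed.

Hypothesis vlab : labB v <= n.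
Hypothesis vpar : labB (parB v) < labB v.

Lemma forkSB : is_fork w S -> is_fork w B.
Proof.
case=> L0 L1 L2 L3 L4; split.
- move=> u /=; case: (eqVneq u v) => [-> //|nu].
  by rewrite -(prK nu) -labSE.
- by move: L1; rewrite /Defs.root /= -e0 -labSE.
- move=> u /= nu; case: (eqVneq u v) => [-> //|nv].
  have nj : pr u != ord0 by rewrite -e_eq0 prK.
  rewrite -(prK nv) parSE // -!labSE; exact: (L2 _ nj).
- move=> i hi; rewrite (card_lift v) /=.
  have -> : (labB v == i) = false.
    by apply/negP => /eqP E; move: vadv; rewrite E hi.
  rewrite -(L3 i hi); apply: eq_card => j; by rewrite !inE /= labSE.
- move=> T1 T2 i j TT1 TT2 hi hj ij E1 E2.
  have h1 : honest_idx w (@tine_lab B T1) by rewrite E1.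
  have h2 : honest_idx w (@tine_lab B T2) by rewrite E2.
  have [s1 [E1' Ts1]] := tineB_notin TT1 (notin_honest TT1 h1).
  have [s2 [E2' Ts2]] := tineB_notin TT2 (notin_honest TT2 h2).
  subst T1 T2.
  rewrite /tine_len !size_map; apply: (L4 _ _ i j) => //; by rewrite tine_labSB.
Qed.
End Embed.


Section CountsR.
Variables (n : nat) (w : n.-tuple bool).

Lemma count_adv_split a b (s : seq nat) : a <= b ->
  count (fun i => adv_idx w i && (a < i)) s =
  count (fun i => adv_idx w i && (b < i)) s +
  count (fun i => adv_idx w i && (a < i) && (i <= b)) s.
Proof.
move=> ab; elim: s => //= x s ->.
case: (adv_idx w x) => /=; last by [].
case: (ltnP b x) => bx; case: (ltnP a x) => ax /=; lia.
Qed.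

Lemma count_mem1 (P : pred nat) b s : b \in s -> P b ->
  0 < count P s.
Proof. by move=> bs Pb; rewrite -has_count; apply/hasP; exists b. Qed.

(* pruning: reserve increases by at least 1 *)
Lemma reserve_step a b : a < b -> adv_idx w b ->
  (count (fun i => adv_idx w i && (b < i)) (iota 1 n)).+1 <=
  count (fun i => adv_idx w i && (a < i)) (iota 1 n).
Proof.
move=> ab ab'; rewrite (count_adv_split _ (ltnW ab)) -addn1 leq_add2l.
apply: (count_mem1 (b:=b)); last by rewrite ab' ab leqnn.
move: ab'; rewrite /adv_idx mem_iota => /andP[/andP[b1 bn] _]; lia.
Qed.

(* extension: minimal adversarial index *)
Lemma reserve_min a b : a < b -> adv_idx w b ->
  (forall i, adv_idx w i -> a < i -> b <= i) ->
  count (fun i => adv_idx w i && (a < i)) (iota 1 n) =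
  (count (fun i => adv_idx w i && (b < i)) (iota 1 n)).+1.
Proof.
move=> ab ab' mn; rewrite (count_adv_split _ (ltnW ab)) -[in RHS]addn1; congr (_ + _).
have -> : count (fun i => adv_idx w i && (a < i) && (i <= b)) (iota 1 n) =
          count (pred1 b) (iota 1 n).
  apply: eq_count => i /=; apply/idP/eqP => [/andP[/andP[ai ai'] ib]|->].
    by apply/eqP; rewrite eqn_leq ib mn.
  by rewrite ab' ab leqnn.
rewrite count_uniq_mem ?iota_uniq // mem_iota.
move: ab'; rewrite /adv_idx => /andP[/andP[b1 bn] _].
by rewrite b1 /=; apply/eqP; apply/idP; lia.
Qed.
End CountsR.

Definition Inv n (w : n.-tuple bool) (h : nat) (F : tree) :=
  is_fork w F /\ (forall T : seq 'I_(tsz F).+1, tine T -> size T <= h) /\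
  exists s1 s2 : seq 'I_(tsz F).+1, [/\ tine s1, tine s2, disjoint_tines s1 s2,
     (0 <= reach w h s1)%R & (0 <= reach w h s2)%R].

Definition rem_par m (parB : 'I_m.+2 -> 'I_m.+2) (v : 'I_m.+2) (j : 'I_m.+1) : 'I_m.+1 :=
  odflt ord0 (unlift v (parB (lift v j))).

Lemma adv_of n (w : n.-tuple bool) i : 0 < i <= n -> ~~ honest_idx w i -> adv_idx w i.
Proof. by rewrite /honest_idx /adv_idx => ->; rewrite negbK. Qed.

Section PruneStep.
Variables (n : nat) (w : n.-tuple bool) (h m : nat).
Variables (parB : 'I_m.+2 -> 'I_m.+2) (labB : 'I_m.+2 -> nat) (v : 'I_m.+2).
Local Notation B := (@Tree m.+1 parB labB).
Local Notation S := (@Tree m (rem_par parB v) (fun j => labB (lift v j))).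
Hypothesis v0 : v != ord0.
Hypothesis leaf : @is_leaf B v.
Hypothesis nhv : ~~ honest_vertex w (F:=B) v.

Lemma leafv : forall u, u != ord0 -> parB u != v.
Proof.
move=> u nu; move/forallP: leaf => /(_ u); rewrite /child /Defs.root /= nu /=.
by [].
Qed.

Lemma parSE' j : j != ord0 -> parB (lift v j) = lift v (rem_par parB v j).
Proof.
move=> nj; rewrite /rem_par.
have : v != parB (lift v j).
  rewrite eq_sym; apply: leafv.
  by rewrite -(e_eq0 v0) in nj.
by case/unlift_some => k E ->.
Qed.

Lemma vadv' : ~~ honest_idx w (labB v).
Proof. by move: nhv; rewrite /honest_vertex /Defs.root /= negb_or => /andP[]. Qed.

Local Notation LS := (fun j => labB (lift v j)).
Local Notation PS := (rem_par parB v).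

Lemma prune_tine (F2B : forall u : 'I_m.+2, u != ord0 -> labB (parB u) < labB u)
  (Lv : labB v <= n) (T : seq 'I_m.+2) : @tine B T ->
  exists s, [/\ @tine S s, (T = map (lift v) s \/ T = rcons (map (lift v) s) v) &
    (reach w (F:=B) h T <= reach w (F:=S) h s)%R].
Proof.
move=> TT; case: (boolP (v \in T)) => vT.
  have [s [E [Ts ns]]] := tineB_in LS v0 leafv parSE' TT vT.
  exists s; split => //; first by right.
  rewrite /reach /tine_len (reserveSB w parB PS v0 (fun _ => erefl)) E size_rcons size_map.
  have lt : labB (last ord0 (map (lift v) s)) < labB v.
    have := @tine_lab_lt B F2B (map (lift v) s) v; rewrite -E; exact.
  have rng : 0 < labB v <= n by rewrite Lv andbT; apply: leq_ltn_trans lt.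
  have R := reserve_step lt (adv_of rng vadv').
  move: R; rewrite /reserve /tine_lab /Defs.root /= last_rcons; lia.
have [s [E Ts]] := tineB_notin LS v0 parSE' TT vT.
exists s; split => //; first by left.
by rewrite /reach /tine_len (reserveSB w parB PS v0 (fun _ => erefl)) E size_map.
Qed.

Lemma prune_step : Inv w h B -> Inv w h S.
Proof.
case=> FB [HB [s1 [s2 [T1 T2 D R1 R2]]]].
have FB' := FB; case: FB' => L0 _ L2 _ _.
have F2B : forall u : 'I_m.+2, u != ord0 -> labB (parB u) < labB u by exact: L2.
have Lv : labB v <= n by exact: L0.
split; first exact: (forkBS v0 (fun _ => erefl) parSE' vadv' FB).
split.
  move=> s Ts; rewrite -(size_map (lift v)); apply: HB.
  by rewrite -(tineSB labB LS v0 parSE').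
have [s1' [Ts1 E1 Q1]] := prune_tine F2B Lv T1.
have [s2' [Ts2 E2 Q2]] := prune_tine F2B Lv T2.
exists s1', s2'; split => //; last first.
- exact: Order.POrderTheory.le_trans R2 Q2.
- exact: Order.POrderTheory.le_trans R1 Q1.
rewrite (disjSB parB labB PS LS v0).
have D1 : @disjoint_tines B (map (lift v) s1') s2.
  by case: E1 D => -> // /disj_rconsl.
by case: E2 D1 => -> // /disj_rconsr.
Qed.
End PruneStep.

Lemma root_honest n (w : n.-tuple bool) (F : tree) : honest_vertex w (Defs.root F).
Proof. by rewrite /honest_vertex eqxx. Qed.

Lemma prune_all n (w : n.-tuple bool) h m (F : tree) : tsz F = m -> Inv w h F ->
  exists F', closed_fork w F' /\ Inv w h F'.
Proof.
elim: m F => [|m IH] [k par lab] /= km; subst k => I.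
  exists (@Tree 0 par lab); split => // u _.
  by rewrite /honest_vertex /Defs.root /= ord1 eqxx.
case: (pickP (fun v => @is_leaf (@Tree m.+1 par lab) v && ~~ honest_vertex w v)) => [v /andP[lv hv]|none].
  have v0 : v != ord0.
    by apply: contraNneq hv => ->; apply: (root_honest w (@Tree m.+1 par lab)).
  exact: (IH (@Tree m (rem_par par v) (fun j => lab (lift v j))) erefl (prune_step v0 lv hv I)).
exists (@Tree m.+1 par lab); split => // u lu.
by have := none u; rewrite lu /= => /negbFE.
Qed.

Lemma disj_sym (F : tree) (s1 s2 : seq 'I_(tsz F).+1) :
  disjoint_tines s1 s2 -> disjoint_tines s2 s1.
Proof.
move=> /allP D; apply/allP => e e2; apply/negP => e1.
by have := D e e1; rewrite e2.
Qed.

Lemma reach_res n (w : n.-tuple bool) h (F : tree) (s : seq 'I_(tsz F).+1) :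
  size s < h -> (0 <= reach w h s)%R -> 0 < reserve w s.
Proof. rewrite /reach /tine_len; lia. Qed.

Lemma reach_eq1 n (w : n.-tuple bool) h (F F' : tree) (s : seq 'I_(tsz F).+1)
  (s' : seq 'I_(tsz F').+1) :
  reserve w s = (reserve w s').+1 -> size s' = (size s).+1 -> reach w h s' = reach w h s.
Proof. rewrite /reach /tine_len => E1 E2; rewrite E1 E2; lia. Qed.

Lemma reach_eq0 n (w : n.-tuple bool) h (F F' : tree) (s : seq 'I_(tsz F).+1)
  (s' : seq 'I_(tsz F').+1) :
  reserve w s = reserve w s' -> size s' = size s -> reach w h s' = reach w h s.
Proof. by rewrite /reach /tine_len => -> ->. Qed.

Section ExtStep.
Variables (n : nat) (w : n.-tuple bool) (h k : nat).
Variables (parS : 'I_k.+1 -> 'I_k.+1) (labS : 'I_k.+1 -> nat) (x : 'I_k.+1) (L : nat).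
Definition parX (u : 'I_k.+2) : 'I_k.+2 :=
  if unlift ord_max u is Some j then lift ord_max (parS j) else lift ord_max x.
Definition labX (u : 'I_k.+2) : nat :=
  if unlift ord_max u is Some j then labS j else L.
Local Notation B := (@Tree k.+1 parX labX).
Local Notation S := (@Tree k parS labS).
Local Notation v := (@ord_max k.+1).

Lemma x_v0 : v != ord0. Proof. by []. Qed.
Lemma x_leaf u : u != ord0 -> parX u != v.
Proof. by move=> _; rewrite /parX; case: (unlift _ _) => [j|]; rewrite lift_eqF. Qed.
Lemma x_labSE j : labS j = labX (lift v j).
Proof. by rewrite /labX liftK. Qed.
Lemma x_parSE j : j != ord0 -> parX (lift v j) = lift v (parS j).
Proof. by rewrite /parX liftK. Qed.
Lemma x_labv : labX v = L.
Proof. by rewrite /labX unlift_none. Qed.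
Lemma x_parv : parX v = lift v x.
Proof. by rewrite /parX unlift_none. Qed.
End ExtStep.

Definition Inv2 n (w : n.-tuple bool) (h : nat) (F : tree) (s1 s2 : seq 'I_(tsz F).+1) :=
  [/\ is_fork w F, (forall T : seq 'I_(tsz F).+1, tine T -> size T <= h),
      (exists T : seq 'I_(tsz F).+1, tine T /\ size T = h),
      [/\ tine s1, tine s2 & disjoint_tines s1 s2] &
      [/\ size s1 <= h, size s2 <= h, (0 <= reach w h s1)%R & (0 <= reach w h s2)%R]].

Lemma ext_one n (w : n.-tuple bool) h (F : tree) (s1 s2 : seq 'I_(tsz F).+1) :
  Inv2 w h s1 s2 -> size s1 < h ->
  exists F' (s1' s2' : seq 'I_(tsz F').+1), Inv2 w h s1' s2' /\
    size s1' = (size s1).+1 /\ size s2' = size s2.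
Proof.
case: F s1 s2 => k parS labS /= s1 s2 [FS HS [T0 [TT0 ST0]] [Ts1 Ts2 D] [S1 S2 R1 R2]] lt.
set x := last ord0 s1.
set P := fun i => adv_idx w i && (labS x < i).
have res : 0 < count P (iota 1 n) by have := @reach_res n w h (@Tree k parS labS) s1 lt R1.
have exP : exists i, P i.
  by move: res; rewrite -has_count => /hasP[i _ Pi]; exists i.
case: (ex_minnP exP) => L /andP[advL xL] minL.
have Ln : L <= n by move: advL; rewrite /adv_idx => /andP[/andP[_ ->]].
have nhL : ~~ honest_idx w L.
  by move: advL; rewrite /adv_idx /honest_idx => /andP[-> ->].
pose parB := parX parS x; pose labB := labX labS L.
have leafv := x_leaf parS x.
have labSE := x_labSE labS L.
have parSE := x_parSE parS x.
have vadv : ~~ honest_idx w (labB ord_max) by rewrite /labB x_labv.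
have vlab : labB ord_max <= n by rewrite /labB x_labv.
have vpar : labB (parB ord_max) < labB ord_max.
  by rewrite /labB /parB x_labv x_parv -x_labSE.
have FB := forkSB (x_v0 k) leafv labSE parSE vadv vlab vpar FS.
exists (@Tree k.+1 parB labB), (rcons (map (lift ord_max) s1) ord_max),
  (map (lift ord_max) s2).
rewrite size_rcons !size_map; split => //; split => //.
- move=> T TT; case: (boolP (ord_max \in T)) => vT.
    have [s [E [Ts ns]]] := tineB_in labS (x_v0 k) leafv parSE TT vT.
    move: TT; rewrite E tine_rcons => /andP[_ /childP[C _]].
    move: C; rewrite /= /parB x_parv (last_e (x_v0 k)) => /lift_inj Ex.
    have Es : s = s1 by apply: (@tine_uniq (@Tree k parS labS)) => //; rewrite /Defs.root /= -Ex.
    by rewrite size_rcons size_map Es.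
  have [s [E Ts]] := tineB_notin labS (x_v0 k) parSE TT vT.
  by rewrite E size_map; apply: HS.
- exists (map (lift ord_max) T0); rewrite size_map; split => //.
  by rewrite -(tineSB labB labS (x_v0 k) parSE).
- have T1' : @tine (@Tree k.+1 parB labB) (map (lift ord_max) s1)
    by rewrite -(tineSB labB labS (x_v0 k) parSE).
  split.
  + by rewrite tine_rcons T1' /= /child /= /parB x_parv (last_e (x_v0 k)) eqxx.
  + by rewrite -(tineSB labB labS (x_v0 k) parSE).
  + rewrite /disjoint_tines edges_rcons all_rcons.
    have := D; rewrite (disjSB parB labB parS labS (x_v0 k)) /disjoint_tines => ->.
    rewrite andbT (edgesSB parB labB parS labS (x_v0 k)).
    apply/mapP => [[[a b]] _ E].
    by have := f_equal snd E => /= /esym/eqP; rewrite lift_eqF.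
- split => //.
  + by rewrite size_rcons size_map.
  + by rewrite size_map.
  + rewrite (@reach_eq1 n w h (@Tree k parS labS) _ s1) //; last by rewrite size_rcons size_map.
    rewrite /reserve /tine_lab last_rcons /= /labB x_labv /Defs.root /= -/x.
    exact: (reserve_min xL advL (fun i a b => minL i (introT andP (conj a b)))).
  + rewrite (@reach_eq0 n w h (@Tree k parS labS) _ s2) ?size_map //.
    by rewrite (reserveSB w parB parS (x_v0 k) labSE).
Qed.

Lemma height_exists (F : tree) h :
  (forall T : seq 'I_(tsz F).+1, tine T -> size T <= h) ->
  exists h', is_height F h' /\ h' <= h.
Proof.
move=> HT.
pose P := fun k => `[< exists T : seq 'I_(tsz F).+1, tine T /\ size T = k >].
have exP : exists k, P k by exists 0; apply/asboolP; exists [::].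
have ubP : forall k, P k -> k <= h.
  by move=> k /asboolP[T [TT <-]]; apply: HT.
case: (ex_maxnP exP ubP) => i /asboolP[T [TT ST]] mx.
exists i; split; last by rewrite -ST; apply: HT.
split; first by exists T.
by move=> s Ts; apply: mx; apply/asboolP; exists s.
Qed.

Lemma reach_mono n (w : n.-tuple bool) h h' (F : tree) (s : seq 'I_(tsz F).+1) :
  h' <= h -> (reach w h s <= reach w h' s)%R.
Proof. rewrite /reach; lia. Qed.

Lemma ext_all n (w : n.-tuple bool) h d : forall (F : tree) (s1 s2 : seq 'I_(tsz F).+1),
  (h - size s1) + (h - size s2) = d -> Inv2 w h s1 s2 ->
  exists F', is_fork w F' /\ balanced F'.
Proof.
elim: d => [|d IH] F s1 s2 Ed Hi.
  case: Hi => FF HF [T [TT ST]] [T1 T2 D] [S1 S2 _ _].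
  exists F; split => //; exists h; split; first by split => //; exists T.
  exists s1, s2; split => //; rewrite /tine_len; lia.
case: (ltnP (size s1) h) => l1.
  have [F' [s1' [s2' [I' [E1 E2]]]]] := ext_one Hi l1.
  apply: (IH F' s1' s2') => //; rewrite E1 E2; lia.
have l2 : size s2 < h by case: Hi => _ _ _ _ [S1 S2 _ _]; lia.
have I2 : Inv2 w h s2 s1.
  case: Hi => a b c [t1 t2 D] [u1 u2 u3 u4]; split => //; split => //; exact: disj_sym.
have [F' [s2' [s1' [I' [E2 E1]]]]] := ext_one I2 l2.
apply: (IH F' s1' s2'); first by rewrite E1 E2; lia.
case: I' => a b c [t1 t2 D] [u1 u2 u3 u4]; split => //; split => //; exact: disj_sym.
Qed.

Lemma mu_forkable n (w : n.-tuple bool) : mu_nonneg w -> forkable w.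
Proof.
case=> F [FF CF [h [[[T [TT ST]] HF] [s1 [s2 [T1 T2 D]]]]]].
rewrite le_min => /andP[R1 R2].
apply: (ext_all (d := (h - size s1) + (h - size s2)) (F := F) (s1 := s1) (s2 := s2)) => //.
split => //; first by exists T.
split => //; exact: HF.
Qed.

Lemma forkable_mu n (w : n.-tuple bool) : forkable w -> mu_nonneg w.
Proof.
case=> F [FF [h [[_ HF] [s1 [s2 [T1 T2 D S1 S2]]]]]].
have Hi : Inv w h F.
  split => //; split => //; exists s1, s2; split => //;
  rewrite /reach ?S1 ?S2; lia.
have [F' [CF [FF' [HF' [t1 [t2 [U1 U2 D' R1 R2]]]]]]] := prune_all erefl Hi.
have [h' [Hh' le]] := height_exists HF'.
exists F'; split => //; exists h'; split => //; exists t1, t2; split => //.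
rewrite le_min; apply/andP; split.
  exact: Order.POrderTheory.le_trans R1 (reach_mono _ _ le).
exact: Order.POrderTheory.le_trans R2 (reach_mono _ _ le).
Qed.

Section Counts.
Variables (n : nat) (w : n.-tuple bool).
Definition cnt0 a b := count (honest_idx w) (iota a.+1 (b - a)).
Definition cnt1 a b := count (adv_idx w) (iota a.+1 (b - a)).

Lemma iota_split a b c : a <= b -> b <= c ->
  iota a.+1 (c - a) = iota a.+1 (b - a) ++ iota b.+1 (c - b).
Proof.
move=> ab bc; have -> : c - a = (b - a) + (c - b) by lia.
by rewrite iotaD; congr (_ ++ iota _ _); lia.
Qed.

Lemma cnt0D a b c : a <= b -> b <= c -> cnt0 a c = cnt0 a b + cnt0 b c.
Proof.
by move=> ab bc; rewrite /cnt0 (iota_split ab bc) count_cat.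
Qed.
Lemma cnt1D a b c : a <= b -> b <= c -> cnt1 a c = cnt1 a b + cnt1 b c.
Proof.
by move=> ab bc; rewrite /cnt1 (iota_split ab bc) count_cat.
Qed.
Lemma cnt0S a b : a <= b -> cnt0 a b.+1 = cnt0 a b + honest_idx w b.+1.
Proof.
move=> ab; rewrite (cnt0D ab (leqnSn b)) /cnt0 subSn // subnn /=; lia.
Qed.
Lemma cnt1S a b : a <= b -> cnt1 a b.+1 = cnt1 a b + adv_idx w b.+1.
Proof.
move=> ab; rewrite (cnt1D ab (leqnSn b)) /cnt1 subSn // subnn /=; lia.
Qed.

Lemma cnt1_pos b c : b < c -> adv_idx w c -> 0 < cnt1 b c.
Proof.
move=> bc ac; rewrite /cnt1 -has_count; apply/hasP; exists c => //.
rewrite mem_iota; apply/andP; split; lia.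
Qed.

Lemma cnt0_pos b c : b < c -> honest_idx w c -> 0 < cnt0 b c.
Proof.
move=> bc ac; rewrite /cnt0 -has_count; apply/hasP; exists c => //.
rewrite mem_iota; apply/andP; split; lia.
Qed.

Lemma cnt0_last a c : a < c -> cnt0 a c = cnt0 a c.-1 + honest_idx w c.
Proof. by case: c => [//|c] ac; rewrite cnt0S. Qed.

Definition X t : int := (cnt0 0 t)%:Z - (cnt1 0 t)%:Z.

Lemma Xdiff a b : a <= b -> (X b - X a = (cnt0 a b)%:Z - (cnt1 a b)%:Z)%R.
Proof. move=> ab; rewrite /X (cnt0D (leq0n a) ab) (cnt1D (leq0n a) ab); lia. Qed.
End Counts.

Lemma adv_of' n (w : n.-tuple bool) i : 0 < i <= n -> ~~ honest_idx w i -> adv_idx w i.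
Proof. by rewrite /honest_idx /adv_idx => ->; rewrite negbK. Qed.

Lemma root_honest' n (w : n.-tuple bool) (F : tree) : honest_vertex w (Defs.root F).
Proof. by rewrite /honest_vertex eqxx. Qed.

Lemma find_split (T : eqType) (a : pred T) (s : seq T) :
  exists seg rest, [/\ s = seg ++ rest, (forall y, y \in seg -> ~~ a y) &
     (rest = [::] \/ exists z r, rest = z :: r /\ a z)].
Proof.
elim: s => [|x s [seg [rest [E H1 H2]]]]; first by exists [::], [::]; split => //; left.
case: (boolP (a x)) => ax.
  by exists [::], (x :: s); split => //; right; exists x, s.
exists (x :: seg), rest; split => //; first by rewrite E.
by move=> y; rewrite in_cons => /orP[/eqP -> //|]; apply: H1.
Qed.

Section Catalan.
Variables (n : nat) (w : n.-tuple bool) (F : tree).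
Notation V := ('I_(tsz F).+1).
Notation rt := (Defs.root F).
Hypothesis FF : is_fork w F.

Lemma F0 (v : V) : lab v <= n. Proof. by case: FF. Qed.
Lemma F1 : lab rt = 0. Proof. by case: FF. Qed.
Lemma F2 (v : V) : v != rt -> lab (par v) < lab v. Proof. by case: FF => _ _ H _ _; apply: H. Qed.

Lemma lab_pos (v : V) : v != rt -> 0 < lab v.
Proof. by move=> /F2; apply: leq_ltn_trans. Qed.

Lemma honest_uniq (y z : V) : honest_idx w (lab y) -> lab y = lab z -> y = z.
Proof.
move=> hy E; case: FF => _ _ _ H3 _.
have /eqP/card1P[x Ax] := H3 _ hy.
have := Ax y; have := Ax z; rewrite !inE E eqxx.
by move=> /esym/eqP -> /esym/eqP ->.
Qed.

Lemma honest_exists j : honest_idx w j -> exists y : V, lab y = j.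
Proof.
move=> hj; case: FF => _ _ _ H3 _.
have /eqP/card1P[x Ax] := H3 _ hj.
by exists x; have := Ax x; rewrite !inE eqxx => /eqP.
Qed.

Lemma hv_root_or (y : V) : honest_vertex w y -> y = rt \/ (y != rt /\ honest_idx w (lab y)).
Proof.
rewrite /honest_vertex; case: (eqVneq y rt) => [->|ny] /=; first by left.
by right.
Qed.

Lemma dep_lt (y z : V) : honest_vertex w y -> honest_vertex w z -> lab y < lab z ->
  depth y < depth z.
Proof.
move=> hy hz lt.
have nz : z != rt by apply/negP => /eqP E; move: lt; rewrite E F1.
case: (hv_root_or hy) => [->|[ny hy']]; first by rewrite depth_root depth_pos.
case: (hv_root_or hz) => [E|[_ hz']]; first by move/eqP: nz.
case: FF => _ _ _ _ H4.
have [Ty Ly] := tine_toP F2 y; have [Tz Lz] := tine_toP F2 z.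
apply: (H4 _ _ (lab y) (lab z)) => //; by rewrite /tine_lab ?Ly ?Lz.
Qed.

Lemma dep_le (y z : V) : honest_vertex w y -> honest_vertex w z -> lab y <= lab z ->
  depth y <= depth z.
Proof.
move=> hy hz; rewrite leq_eqVlt => /orP[/eqP E|lt]; last by apply/ltnW/dep_lt.
case: (hv_root_or hy) => [Ey|[ny hy']].
  case: (hv_root_or hz) => [Ez|[nz _]]; first by rewrite Ey Ez.
  by move: (lab_pos nz); rewrite -E Ey F1.
by rewrite (honest_uniq hy' E).
Qed.

Lemma chain (u : V) : honest_vertex w u -> forall j, lab u <= j -> j <= n ->
  exists y : V, [/\ honest_vertex w y, lab u <= lab y <= j &
                   depth u + cnt0 w (lab u) j <= depth y].
Proof.
move=> hu j uj jn; elim: j uj jn => [|j IH] uj jn.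
  exists u; split => //; first by rewrite leqnn.
  by rewrite /cnt0 sub0n addn0.
case: (leqP (lab u) j) => [uj'|ju].
  have [y [hy /andP[uy yj] dy]] := IH uj' (ltnW jn).
  rewrite cnt0S //.
  case: (boolP (honest_idx w j.+1)) => hj.
    have [z Lz] := honest_exists hj.
    have hz : honest_vertex w z by rewrite /honest_vertex Lz hj orbT.
    exists z; split => //; first by rewrite Lz (leq_trans uy (leq_trans yj (leqnSn j))) /=.
    have yz : lab y < lab z by rewrite Lz ltnS.
    have := dep_lt hy hz yz.
    move: dy; lia.
  exists y; split => //; first by rewrite uy (leq_trans yj).
  by rewrite addn0.
have -> : lab u = j.+1 by lia.
exists u; split => //; first by rewrite -(_ : lab u = j.+1) ?leqnn //; lia.
by rewrite /cnt0 subnn addn0.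
Qed.

Lemma lab_mono (p q : seq V) : tine (p ++ q) -> lab (last rt p) <= lab (last rt (p ++ q)).
Proof.
elim/last_ind: q => [|q y IH]; first by rewrite cats0.
rewrite -rcons_cat => T; have := tine_lab_lt F2 T.
move: T; rewrite tine_rcons => /andP[T _].
rewrite last_rcons => lt; exact: leq_trans (IH T) (ltnW lt).
Qed.

Lemma tine_nonroot (s : seq V) x : tine s -> x \in s -> x != rt.
Proof.
move=> T xs; case/splitPr: xs T => p1 p2.
rewrite /tine cat_path /= => /and3P[_ C _].
by case/childP: C.
Qed.

Lemma seg_count (p seg : seq V) : tine (p ++ seg) ->
  (forall y, y \in seg -> ~~ honest_vertex w y) ->
  size seg <= cnt1 w (lab (last rt p)) (lab (last rt (p ++ seg))).
Proof.
elim/last_ind: seg => [|seg y IH] T NH; first by [].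
move: T; rewrite -rcons_cat => T.
have lt := tine_lab_lt F2 T.
move: T; rewrite tine_rcons => /andP[T C].
have NH' : forall z, z \in seg -> ~~ honest_vertex w z.
  by move=> z zs; apply: NH; rewrite mem_rcons in_cons zs orbT.
have IH' := IH T NH'.
have ab := lab_mono T.
have ny : y != rt by case/childP: C.
have hy : ~~ honest_idx w (lab y).
  have yy : y \in rcons seg y by rewrite mem_rcons mem_head.
  by have := NH y yy; rewrite /honest_vertex negb_or => /andP[].
have rng : 0 < lab y <= n by rewrite F0 andbT; apply: lab_pos.
have adv := adv_of' rng hy.
rewrite last_rcons size_rcons.
move: lt IH' ab adv; set a := lab _; set b := lab _; set c := lab y => lt IH' ab adv.
rewrite (cnt1D w ab (ltnW lt)).
have := cnt1_pos lt adv; lia.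
Qed.

Variable i : nat.
Hypothesis i1 : 0 < i.
Hypothesis iN : i <= n.
Hypothesis Xlt : forall s, s < i -> (X w s < X w i)%R.
Hypothesis Xge : forall s, i <= s -> s <= n -> (X w i <= X w s)%R.
Variable h : nat.
Hypothesis HT : forall T : seq V, tine T -> size T <= h.

Lemma final_case (t p seg : seq V) : tine t -> size t = h -> t = p ++ seg ->
  honest_vertex w (last rt p) -> lab (last rt p) < i ->
  (forall y, y \in seg -> ~~ honest_vertex w y) -> False.
Proof.
move=> Tt St Et hu lu NH; subst t.
have Tp := tine_cat Tt.
have du := depth_tine F2 Tp.
have sc := seg_count Tt NH.
have bn := F0 (last rt (p ++ seg)).
have ab := lab_mono Tt.
have ln : lab (last rt p) <= n by exact: F0.
have [y [hy /andP[_ yn] dy]] := chain hu ln (leqnn n).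
have [Ty _] := tine_toP F2 y.
have yh := HT Ty.
have X1 := Xdiff w ln.
have X2 := Xlt lu.
have X3 := Xge iN (leqnn n).
have C := cnt1D w ab bn.
move: St; rewrite size_cat => St.
move: dy yh; rewrite du /depth => dy yh.
lia.
Qed.

Lemma mid_case (t p seg r : seq V) z : tine t -> t = p ++ seg ++ z :: r ->
  honest_vertex w (last rt p) -> lab (last rt p) < i ->
  (forall y, y \in seg -> ~~ honest_vertex w y) -> honest_vertex w z -> i < lab z -> False.
Proof.
move=> Tt Et hu lu NH hz iz; subst t.
have Tpz : tine (rcons (p ++ seg) z).
  by move: Tt; rewrite catA -cat_rcons; apply: tine_cat.
have Tps : tine (p ++ seg) by move: Tpz; rewrite tine_rcons => /andP[].
have Tp := tine_cat Tps.
have du := depth_tine F2 Tp.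
have dz := depth_tine F2 Tpz; rewrite last_rcons size_rcons size_cat in dz.
have sc := seg_count Tps NH.
have bz := tine_lab_lt F2 Tpz.
have ab := lab_mono Tps.
have zn := F0 z.
have [y [hy /andP[uy yz] dy]] := chain hu (ltnW (ltn_trans lu iz)) zn.
have dyz := dep_le hy hz yz.
have nz : z != rt by apply: (tine_nonroot Tpz); rewrite mem_rcons mem_head.
have hz' : honest_idx w (lab z) by case: (hv_root_or hz) => [E|[]//]; move/eqP: nz.
have E0 := cnt0_last w (ltn_trans lu iz); rewrite hz' in E0.
have bc : lab (last rt (p ++ seg)) <= (lab z).-1 by lia.
have C1 := cnt1D w ab bc.
have c1 : lab (last rt p) <= (lab z).-1 by lia.
have X1 := Xdiff w c1.
have X2 := Xlt lu.
have ic : i <= (lab z).-1 by lia.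
have cn : (lab z).-1 <= n by lia.
have X3 := Xge ic cn.
lia.
Qed.

Lemma catalan_main (t : seq V) : tine t -> size t = h -> exists2 x, x \in t & lab x = i.
Proof.
move=> Tt St.
case: (boolP (has (fun x => lab x == i) t)) => [/hasP[x xt /eqP E]|/hasPn NI].
  by exists x.
exfalso.
suff: forall k (p q : seq V), size q <= k -> t = p ++ q -> honest_vertex w (last rt p) ->
  lab (last rt p) < i -> False.
  by move=> /(_ (size t) [::] t (leqnn _) erefl (root_honest' w F)); rewrite /= F1; apply.
elim=> [|k IH] p q Sq Et hu lu.
  by apply: (final_case Tt St Et hu lu) => y; case: q Sq {Et}.
have [seg [rest [Eq NH [Er|[z [r [Er hz]]]]]]] := find_split (@honest_vertex n w F) q; subst q rest.
  by apply: (final_case Tt St _ hu lu NH); rewrite Et cats0.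
have zt : z \in t by rewrite Et !mem_cat mem_head !orbT.
have nzi := NI z zt.
case: (ltngtP (lab z) i) => [zi|iz|E].
- have Sr : size r <= k by move: Sq; rewrite size_cat /=; lia.
  have Et' : t = rcons (p ++ seg) z ++ r by rewrite Et -cats1 -!catA.
  have hz' : honest_vertex w (last rt (rcons (p ++ seg) z)) by rewrite last_rcons.
  have lz : lab (last rt (rcons (p ++ seg) z)) < i by rewrite last_rcons.
  exact: (IH _ _ Sr Et' hz' lz).
- exact: (mid_case Tt Et hu lu NH hz iz).
- by rewrite E eqxx in nzi.
Qed.
End Catalan.

Definition step (s : nat * nat) (b : bool) : nat * nat :=
  if b then (s.1.-1, s.2.+1)
  else (if (0 < s.1) || (s.2 == 0) then s.1.+1 else 0, s.2.-1).

Definition st n (w : n.-tuple bool) t := foldl step (0, 0) (take t w).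

Section Walk.
Variables (n : nat) (w : n.-tuple bool).

Lemma st_succ t : t < n -> st w t.+1 = step (st w t) (wbit w t.+1).
Proof.
by move=> tn; rewrite /st (take_nth false) ?size_tuple // -cats1 foldl_cat.
Qed.

Lemma X_succ t : t < n ->
  X w t.+1 = (X w t + (if wbit w t.+1 then -1 else 1))%R.
Proof.
move=> tn; rewrite /X cnt0S // cnt1S // /honest_idx /adv_idx.
have -> : (1 <= t.+1 <= n) = true by apply/andP; split.
by case: (wbit w t.+1) => /=; lia.
Qed.

Definition INV t := let: (G, E) := st w t in
  (forall s, s <= t -> (X w s <= X w t + E%:Z)%R) /\
  (0 < G -> exists i, [/\ 0 < i <= t, (forall s, s < i -> (X w s < X w i)%R),
      (forall s, i <= s -> s <= t -> (X w i <= X w s)%R) & X w t = (X w i + (G.-1)%:Z)%R]).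

Lemma INV0 : INV 0.
Proof.
rewrite /INV /st take0 /=; split => // s; rewrite leqn0 => /eqP ->; lia.
Qed.

Lemma INVS t : t < n -> INV t -> INV t.+1.
Proof.
move=> tn; rewrite /INV st_succ //.
have XS := X_succ tn.
case: (st w t) => G E [HE HG].
case: (wbit w t.+1) XS => /= XS.
- split.
    move=> s; rewrite leq_eqVlt => /orP[/eqP ->|]; first lia.
    rewrite ltnS => /HE; lia.
  move=> G1; have [|i [/andP[i0 it] Hlt Hge EX]] := HG; first lia.
  exists i; split => //; first by rewrite i0 /= ltnW.
  move=> s isv; rewrite leq_eqVlt => /orP[/eqP ->|]; first lia.
  by rewrite ltnS; apply: Hge.
  lia.
- case: (boolP ((0 < G) || (E == 0))) => /= C.
  + split.
      move=> s; rewrite leq_eqVlt => /orP[/eqP ->|]; first lia.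
      rewrite ltnS => /HE; move: C; lia.
    move=> _; case: (posnP G) => [G0|Gp].
      have E0 : E = 0 by move: C; rewrite G0 /= => /eqP.
      exists t.+1; split.
      * by rewrite /= leqnn.
      * move=> s; rewrite ltnS => /HE; rewrite E0; lia.
      * move=> s a b; have -> : s = t.+1 by lia. lia.
      * rewrite G0 /=; lia.
    have [i [/andP[i0 it] Hlt Hge EX]] := HG Gp.
    exists i; split => //; first by rewrite i0 /= ltnW.
      move=> s isv; rewrite leq_eqVlt => /orP[/eqP ->|]; first lia.
      by rewrite ltnS; apply: Hge.
    lia.
  + split => //.
    move=> s; rewrite leq_eqVlt => /orP[/eqP ->|]; first lia.
    rewrite ltnS => /HE; move: C; lia.
Qed.

Lemma INV_all t : t <= n -> INV t.
Proof.
elim: t => [|t IH] tn; first exact: INV0.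
by apply: INVS => //; apply: IH; apply: ltnW.
Qed.
End Walk.

Lemma alive_honest n (w : n.-tuple bool) i : 0 < i <= n ->
  (X w i.-1 < X w i)%R -> honest_idx w i.
Proof.
move=> /andP[i0 iN]; have ii : i.-1 <= i by lia.
have := Xdiff w ii.
rewrite /cnt0 /cnt1; have -> : i - i.-1 = 1 by lia.
have -> : i.-1.+1 = i by lia.
rewrite /= !addn0 /honest_idx /adv_idx i0 iN /=.
case: (wbit w i) => /=; lia.
Qed.

Lemma forkable_G0 n (w : n.-tuple bool) : forkable w -> (st w n).1 = 0.
Proof.
move=> [F [FF [h [[_ HT] [s1 [s2 [T1 T2 D S1 S2]]]]]]].
have := INV_all w (leqnn n); rewrite /INV.
case: (st w n) => G Ee [_ HG] /=.
case: (posnP G) => // Gp; exfalso.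
have [i [/andP[i0 iN] Hlt Hge _]] := HG Gp.
have [x1 x1s L1] := catalan_main FF i0 iN Hlt Hge HT T1 S1.
have [x2 x2s L2] := catalan_main FF i0 iN Hlt Hge HT T2 S2.
have hi : honest_idx w i.
  apply: alive_honest; first by rewrite i0.
  by apply: Hlt; lia.
have E12 : x1 = x2 by apply: (honest_uniq FF); rewrite ?L1 ?L2.
subst x2.
have e1 := edge_in_tine T1 x1s.
have e2 := edge_in_tine T2 x2s.
by move/allP: D => /(_ _ e1); rewrite e2.
Qed.

Local Open Scope ring_scope.

Section Consts.
Variables (R : realType) (eps : R).
Hypothesis e0 : 0 < eps.
Hypothesis e1 : eps < 1.

Ltac ee := have ? := e0; have ? := e1.

Definition pp := (1 - eps) / 2.
Definition gm := (1 + eps)^-1.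
Definition th := 1 + eps ^+ 2 / 2.
Definition a1 := ((1 - pp) * gm ^+ 2 + pp * th ^+ 2) / (gm * th).
Definition a2 := ((1 - pp) * gm ^+ 2 + pp * th) / gm.
Definition a3 := ((1 - pp) + pp * th ^+ 2) / th.
Definition a4 := (1 - pp) * gm + pp * th.
Definition lam := Num.max (Num.max a1 a2) (Num.max a3 a4).

Lemma D0 : 1 + eps != 0. Proof. ee; by apply/lt0r_neq0; lra. Qed.
Lemma gm_gt0 : 0 < gm. Proof. ee; by rewrite /gm invr_gt0; lra. Qed.
Lemma gm_le1 : gm <= 1. Proof. ee; rewrite /gm invf_le1; lra. Qed.
Lemma th_ge1 : 1 <= th. Proof. ee; rewrite /th lerDl; apply: divr_ge0; [exact: sqr_ge0|lra]. Qed.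
Lemma th_gt0 : 0 < th. Proof. have := th_ge1; lra. Qed.
Lemma pp_ge0 : 0 <= pp. Proof. ee; rewrite /pp; lra. Qed.
Lemma pp_le1 : pp <= 1. Proof. ee; rewrite /pp; lra. Qed.

Lemma a1_lt1 : a1 < 1.
Proof.
ee.
have g0 := gm_gt0; have t0 := th_gt0.
rewrite /a1 ltr_pdivrMr ?mulr_gt0 // mul1r -subr_gt0.
have -> : gm * th - ((1 - pp) * gm ^+ 2 + pp * th ^+ 2) =
  gm ^+ 2 * ((1 + eps) / 2 * (eps ^+ 2 + 3/4 * eps ^+ 4 + 1/4 * eps ^+ 6)).
  rewrite /gm /th /pp; field; exact: D0.
apply: mulr_gt0; first exact: exprn_gt0.
apply: mulr_gt0; first lra.
have := exprn_gt0 2 e0; have := exprn_gt0 4 e0; have := exprn_gt0 6 e0; lra.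
Qed.

Lemma a2_lt1 : a2 < 1.
Proof.
ee; have g0 := gm_gt0; have t0 := th_gt0.
rewrite /a2 ltr_pdivrMr // mul1r -subr_gt0.
have -> : gm - ((1 - pp) * gm ^+ 2 + pp * th) =
  gm ^+ 2 * ((1 + eps) / 2 * (eps ^+ 2 / 2 + eps ^+ 4 / 2)).
  rewrite /gm /th /pp; field; exact: D0.
apply: mulr_gt0; first exact: exprn_gt0.
apply: mulr_gt0; first lra.
have := exprn_gt0 2 e0; have := exprn_gt0 4 e0; lra.
Qed.

Lemma a3_lt1 : a3 < 1.
Proof.
ee; have t0 := th_gt0.
rewrite /a3 ltr_pdivrMr // mul1r -subr_gt0.
have -> : th - ((1 - pp) + pp * th ^+ 2) =
  eps ^+ 2 / 2 * (eps - eps ^+ 2 / 4 + eps ^+ 3 / 4).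
  by rewrite /th /pp; field.
apply: mulr_gt0; first by have := exprn_gt0 2 e0; lra.
have : eps ^+ 2 < eps by rewrite expr2; nra.
have := exprn_gt0 3 e0; lra.
Qed.

Lemma a4_lt1 : a4 < 1.
Proof.
ee; have g0 := gm_gt0.
rewrite /a4 -subr_gt0.
have -> : 1 - ((1 - pp) * gm + pp * th) =
  gm * ((1 + eps) / 2 * (eps - eps ^+ 2 / 2 + eps ^+ 3 / 2)).
  rewrite /gm /th /pp; field; exact: D0.
apply: mulr_gt0 => //; apply: mulr_gt0; first lra.
have : eps ^+ 2 < eps by rewrite expr2; nra.
have := exprn_gt0 3 e0; lra.
Qed.

Lemma a4_gt0 : 0 < a4.
Proof.
rewrite /a4; have := gm_gt0; have := th_gt0; have := pp_ge0; have := pp_le1.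
move=> h1 h2 h3 h4; apply: ltr_wpDr; first by apply: mulr_ge0 => //; lra.
apply: mulr_gt0 => //; rewrite /pp; ee; lra.
Qed.

Lemma lam_lt1 : lam < 1.
Proof. by rewrite /lam !gt_max a1_lt1 a2_lt1 a3_lt1 a4_lt1. Qed.
Lemma lam_gt0 : 0 < lam.
Proof. by rewrite /lam !lt_max a4_gt0 !orbT. Qed.
Lemma a1_le : a1 <= lam. Proof. by rewrite /lam !le_max lexx. Qed.
Lemma a2_le : a2 <= lam. Proof. by rewrite /lam !le_max lexx !orbT. Qed.
Lemma a3_le : a3 <= lam. Proof. by rewrite /lam !le_max lexx !orbT. Qed.
Lemma a4_le : a4 <= lam. Proof. by rewrite /lam !le_max lexx !orbT. Qed.

Definition Phi (s : nat * nat) : R := gm ^+ s.1 * th ^+ s.2.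

Lemma Phi_ge0 s : 0 <= Phi s.
Proof. by rewrite /Phi mulr_ge0 // exprn_ge0 // ltW // ?gm_gt0 ?th_gt0. Qed.

Lemma Phi_ge1 s : s.1 = 0%N -> 1 <= Phi s.
Proof.
case: s => G E /= ->; rewrite /Phi expr0 mul1r.
case: E => [|E]; first by rewrite expr0.
by rewrite expr_ge1 // ?th_ge1 // ltW // th_gt0.
Qed.

Lemma one_state s : Phi (step s false) <= Phi (step s true) /\
  (1 - pp) * Phi (step s false) + pp * Phi (step s true) <= lam * Phi s.
Proof.
have g0 := gm_gt0; have t0 := th_gt0; have g1 := gm_le1; have t1 := th_ge1.
have K0 : forall G E, 0 <= gm ^+ G * th ^+ E.
  by move=> G E; apply: mulr_ge0; apply: exprn_ge0; apply: ltW.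
case: s => [[|G] [|E]]; rewrite /Phi /step /=.
- split; first by rewrite !mulr1 !mul1r expr1; lra.
  rewrite !expr0 !mulr1 !mul1r !expr1; have := a4_le; rewrite /a4; lra.
- have KE := K0 0%N E; rewrite expr0 !mul1r in KE *; rewrite !exprS; split.
    have -> : th * (th * th ^+ E) = th ^+ E * (th * th) by ring.
    rewrite -{1}[th ^+ E]mulr1; apply: ler_wpM2l => //; nra.
  have -> : (1 - pp) * th ^+ E + pp * (th * (th * th ^+ E)) = a3 * (th * th ^+ E).
    rewrite /a3; field; exact: lt0r_neq0.
  by apply: ler_wpM2r; [apply: mulr_ge0 => //; apply: ltW|exact: a3_le].
- have KG := K0 G 0%N; rewrite expr0 !mulr1 in KG *; rewrite !exprS expr0 !mulr1; split.
    have -> : gm * (gm * gm ^+ G) = gm ^+ G * (gm * gm) by ring.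
    apply: ler_wpM2l => //; nra.
  have -> : (1 - pp) * (gm * (gm * gm ^+ G)) + pp * (gm ^+ G * th) = a2 * (gm * gm ^+ G).
    rewrite /a2; field; exact: lt0r_neq0.
  by apply: ler_wpM2r; [apply: mulr_ge0 => //; apply: ltW|exact: a2_le].
- have K := K0 G E; rewrite !exprS; split.
    have -> : gm * (gm * gm ^+ G) * th ^+ E = (gm ^+ G * th ^+ E) * (gm * gm) by ring.
    have -> : gm ^+ G * (th * (th * th ^+ E)) = (gm ^+ G * th ^+ E) * (th * th) by ring.
    apply: ler_wpM2l => //; nra.
  have -> : (1 - pp) * (gm * (gm * gm ^+ G) * th ^+ E) + pp * (gm ^+ G * (th * (th * th ^+ E)))
     = a1 * (gm * gm ^+ G * (th * th ^+ E)).
    rewrite /a1; field; apply/andP; split; exact: lt0r_neq0.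
  apply: ler_wpM2r; last exact: a1_le.
  rewrite (_ : gm * gm ^+ G * (th * th ^+ E) = gm * th * (gm ^+ G * th ^+ E)); last by ring.
  by apply: mulr_ge0 => //; apply: mulr_ge0; apply: ltW.
Qed.
End Consts.

Section Sums.
Variables (R : realType) (eps : R) (n : nat) (P : n.-tuple bool -> R).
Hypothesis HP : is_distr P.
Hypothesis HM : eps_martingale eps P.

Lemma mart_step t (d : seq bool -> R) : (t < n)%N -> (forall b, 0 <= d b) ->
  \sum_(w | wbit w t.+1) P w * d (take t w) <= (1 - eps) / 2 * \sum_w P w * d (take t w).
Proof.
move=> tn d0.
pose key := fun w : n.-tuple bool => take_tuple t w.
rewrite (partition_big key predT) //= [X in _ <= _ * X](partition_big key predT) //=.
rewrite mulr_sumr; apply: ler_sum => j _.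
have E : forall w, key w == j -> take t w = val j.
  by move=> w /eqP <-.
rewrite (eq_bigr (fun w => P w * d (val j))); last by move=> w /andP[_ /E ->].
rewrite [X in _ <= _ * X](eq_bigr (fun w => P w * d (val j))); last by move=> w /E ->.
rewrite -!big_distrl /= mulrA; apply: ler_wpM2r; first exact: d0.
have sj : size (val j) = t.+1.-1 by rewrite size_tuple; apply/minn_idPl/ltnW.
have rng : (0 < t.+1 <= n)%N by rewrite ltn0Sn tn.
have := HM (t := t.+1) (b := val j) rng sj.
rewrite /=.
have -> : \sum_(w : n.-tuple bool | (take t w == val j) && wbit w t.+1) P w = \sum_(w : n.-tuple bool | wbit w t.+1 && (key w == j)) P w.
  by apply: eq_bigl => w; rewrite andbC.
by have -> : \sum_(w : n.-tuple bool | take t w == val j) P w = \sum_(w : n.-tuple bool | key w == j) P w.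
Qed.

Hypothesis e0 : 0 < eps.
Hypothesis e1 : eps < 1.

Lemma pot t : (t <= n)%N -> \sum_w P w * Phi eps (st w t) <= lam eps ^+ t.
Proof.
have P0 : forall w, 0 <= P w by case: HP.
elim: t => [|t IH] tn.
  rewrite expr0; under eq_bigr => w _ do rewrite /st take0 /= /Phi /= !expr0 mulr1 mulr1.
  by case: HP => _ ->.
pose d := fun b : seq bool => Phi eps (step (foldl step (0%N, 0%N) b) true) -
                              Phi eps (step (foldl step (0%N, 0%N) b) false).
have d0 : forall b, 0 <= d b.
  by move=> b; rewrite /d subr_ge0; case: (one_state e0 e1 (foldl step (0%N, 0%N) b)).
rewrite (eq_bigr (fun w => P w * Phi eps (step (st w t) false) +
           (if wbit w t.+1 then P w * d (take t w) else 0))); last first.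
  move=> w _; rewrite st_succ //; case: (wbit w t.+1); rewrite /d /st; last by rewrite addr0.
  by ring.
rewrite big_split -big_mkcond /=.
apply: Order.POrderTheory.le_trans (lerD (lexx _) (mart_step tn d0)) _.
rewrite mulr_sumr -big_split /= exprS.
apply: (@Order.POrderTheory.le_trans _ _ (lam eps * \sum_w P w * Phi eps (st w t))); last first.
  apply: ler_wpM2l; first exact: ltW (lam_gt0 e0 e1).
  exact: IH (ltnW tn).
rewrite mulr_sumr; apply: ler_sum => w _.
have [_ H] := one_state e0 e1 (st w t).
rewrite /d /st -/(st w t).
rewrite (_ : P w * Phi eps (step (st w t) false) + (1 - eps) / 2 * (P w *
   (Phi eps (step (st w t) true) - Phi eps (step (st w t) false))) =
   P w * ((1 - pp eps) * Phi eps (step (st w t) false) + pp eps * Phi eps (step (st w t) true))); last first.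
  by rewrite /pp; ring.
rewrite [X in _ <= X]mulrCA; apply: ler_wpM2l; first exact: P0.
exact: H.
Qed.

Lemma prob_bound : prob P (@forkable n) <= lam eps ^+ n.
Proof.
have P0 : forall w, 0 <= P w by case: HP.
apply: Order.POrderTheory.le_trans (pot (leqnn n)).
rewrite /prob big_mkcond /=; apply: ler_sum => w _.
case: asboolP => [Fw|_]; last by apply: mulr_ge0 => //; exact: Phi_ge0.
rewrite -{1}[P w]mulr1; apply: ler_wpM2l => //.
apply: Phi_ge1 => //; exact: forkable_G0.
Qed.
End Sums.

Theorem corollary2 (R : realType) (eps : R) (heps : 0 < eps < 1) :
  (forall (n : nat) (P : n.-tuple bool -> R),
      is_distr P -> eps_martingale eps P ->
      prob P (@forkable n) = prob P (@mu_nonneg n)) /\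
  (exists c : R, 0 < c /\ exists N : nat, forall (n : nat) (P : n.-tuple bool -> R),
      (N <= n)%N -> is_distr P -> eps_martingale eps P ->
      prob P (@forkable n) <= expR (- (c * n%:R))).
Proof.
case/andP: heps => e0 e1.
split.
  move=> n P _ _; rewrite /prob; apply: eq_bigl => w.
  by apply/idP/idP => /asboolP H; apply/asboolP; [apply: forkable_mu | apply: mu_forkable].
have l0 := lam_gt0 e0 e1; have l1 := lam_lt1 e0 e1.
exists (- ln (lam eps)); split.
  by rewrite oppr_gt0; apply: ln_lt0; rewrite l0 l1.
exists 0%N => n P _ HP HM.
apply: Order.POrderTheory.le_trans (prob_bound HP HM e0 e1) _.
by rewrite mulNr opprK mulrC expRM_natl lnK // posrE.
Qed.
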